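(* Let $(G,\sigma)$ be a finite connected signed graph satisfying $CD_{p}^{\sigma}(K,N)$ with $p\geq2$, $N>1$ and $K>0$. Then the first (smallest) nonzero eigenvalue $\lambda_p^\sigma$ of $\Delta_p^\sigma$ satisfies \[ \lambda_{p}^{\sigma}\geq\left(\frac{1}{\mathrm{vol}(G)}\right)^{\frac{p-2}{2}}\left(\frac{NK}{N-1}\right)^{\frac{p}{2}}, \] where $\mathrm{vol}(G)=\sum_{x\in V}d_x$.
   Context: $G=(V,E)$ is a finite simple connected graph with degrees $d_x$; $\sigma:E\to\{\pm1\}$, $\sigma_{xy}=\sigma(\{x,y\})$. For $p>1$: $\Delta_{p}^{\sigma}f(x)=\frac{1}{d_{x}}\sum_{y\sim x}|\sigma_{xy}f(y)-f(x)|^{p-2}(\sigma_{xy}f(y)-f(x))$ (with $|t|^{p-2}t=0$ at $t=0$); eigenvalue $\lambda$: $-\Delta_{p}^{\sigma}f=\lambda|f|^{p-2}f$ for some nonzero $f$. $\Gamma_p^\sigma(f,g)(x)=\frac{1}{2d_{x}}\sum_{y\sim x}|\sigma_{xy}f(y)-f(x)|^{p-2}(\sigma_{xy}f(y)-f(x))(\sigma_{xy}g(y)-g(x))$; $\mathscr{L}^\sigma_{p,f}\varphi(x)=\frac{1}{d_{x}}\sum_{y\sim x}|\sigma_{xy}f(y)-f(x)|^{p-2}(\varphi(y)-\varphi(x))$; $\Gamma_{p,2}^\sigma(f,f)(x)=\frac12\mathscr{L}_{p,f}^\sigma(\Gamma^\sigma_p(f,f))(x)-\Gamma_p^\sigma(f,\Delta_p^\sigma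 f)(x)$. $(G,\sigma)$ satisfies $CD_p^\sigma(K,N)$ if at every $x\in V$, $\Gamma_{p,2}^{\sigma}(f,f)(x)\geq\frac{1}{N}(\Delta_{p}^{\sigma}f(x))^{2}+K(\Gamma^{\sigma}_{p}(f,f)(x))^{\frac{2p-2}{p}}$ for every $f:V\to\mathbb{R}$ with $\sigma_{xy}f(y)-f(x)\neq0$ for every $y\sim x$ ($\frac1N=0$ if $N=\infty$). *)

(* Defs.v *)
From HB Require Import structures.
From mathcomp Require Import all_boot all_order all_algebra.
From mathcomp Require Import reals exp.
Set Implicit Arguments. Unset Strict Implicit. Unset Printing Implicit Defensive.
Import Order.TTheory GRing.Theory Num.Theory.
Local Open Scope ring_scope.

Section SignedGraph.
Variables (R : realType) (V : finType) (adj : rel V) (sigma : V -> V -> R).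

Definition simple_connected_graph : Prop :=
  symmetric adj /\ irreflexive adj /\ (forall x y, connect adj x y).

Definition signature : Prop :=
  forall x y, adj x y -> sigma x y = sigma y x /\ (sigma x y = 1 \/ sigma x y = -1).

Definition deg (x : V) : R := #|[set y | adj x y]|%:R.

Definition vol : R := \sum_(x : V) deg x.

Definition sdiff (f : V -> R) (x y : V) : R := sigma x y * f y - f x.

Definition ppow (p t : R) : R := if t == 0 then 0 else `|t| `^ (p - 2) * t.

Definition plap (p : R) (f : V -> R) (x : V) : R :=
  (deg x)^-1 * \sum_(y | adj x y) ppow p (sdiff f x y).

Definition Gam (p : R) (f g : V -> R) (x : V) : R :=
  (2 * deg x)^-1 * \sum_(y | adj x y) ppow p (sdiff f x y) * sdiff g x y.

Definition Lpf (p : R) (f phi : V -> R) (x : V) : R :=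
  (deg x)^-1 * \sum_(y | adj x y) `|sdiff f x y| `^ (p - 2) * (phi y - phi x).

Definition Gam2 (p : R) (f : V -> R) (x : V) : R :=
  2^-1 * Lpf p f (Gam p f f) x - Gam p f (plap p f) x.

Definition CDp (p K N : R) : Prop :=
  forall (x : V) (f : V -> R), (forall y, adj x y -> sdiff f x y != 0) ->
    Gam2 p f x >= N^-1 * (plap p f x) ^+ 2
                  + K * (Gam p f f x) `^ ((2 * p - 2) / p).

Definition is_eigenvalue (p lam : R) : Prop :=
  exists f : V -> R, (exists x, f x != 0) /\
    forall x, - plap p f x = lam * ppow p (f x).

End SignedGraph.

(* Main.v *)
Require Import Defs.
From HB Require Import structures.
From mathcomp Require Import all_boot all_order all_algebra.
From mathcomp Require Import all_classical all_reals all_analysis.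
From mathcomp Require Import reals exp.
From mathcomp Require Import ring lra.
Import Order.TTheory GRing.Theory Num.Theory.
Import numFieldNormedType.Exports.
Local Open Scope ring_scope.

Section Alg.
Variables (R : realType) (V : finType) (adj : rel V) (sigma : V -> V -> R) (p : R).
Hypotheses (Hsym : symmetric adj) (Hsig : signature adj sigma) (Hp : 2 <= p).

Local Notation d := (deg R adj).

Lemma sum_deg0 x (F : V -> R) : d x = 0 -> \sum_(y | adj x y) F y = 0.
Proof.
rewrite /deg => /eqP; rewrite pnatr_eq0 cards_eq0 => /eqP H.
apply: big_pred0 => y; have : y \notin [set y | adj x y] by rewrite H inE.
by rewrite inE => /negbTE.
Qed.

Lemma degK x (F : V -> R) :
  d x * ((d x)^-1 * \sum_(y | adj x y) F y) = \sum_(y | adj x y) F y.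
Proof.
have [d0|d0] := eqVneq (d x) 0; first by rewrite (sum_deg0 _ _ d0) !mulr0.
by rewrite mulrA mulfV // mul1r.
Qed.

Lemma degK2 x (F : V -> R) :
  d x * ((2 * d x)^-1 * \sum_(y | adj x y) F y) = 2^-1 * \sum_(y | adj x y) F y.
Proof.
have [d0|d0] := eqVneq (d x) 0; first by rewrite (sum_deg0 _ _ d0) !mulr0.
by field; rewrite d0.
Qed.

Lemma ppowE t : ppow p t = `|t| `^ (p - 2) * t.
Proof. by rewrite /ppow; case: eqP => [->|]; rewrite ?mulr0. Qed.

Lemma ppowN t : ppow p (- t) = - ppow p t.
Proof. by rewrite !ppowE normrN mulrN. Qed.

Lemma sig_cases x y : adj x y -> sigma y x = sigma x y /\ (sigma x y = 1 \/ sigma x y = -1).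
Proof. by move=> h; have [e so] := Hsig _ _ h. Qed.

Lemma sdiff_swap f x y : adj x y -> sdiff sigma f y x = - sigma x y * sdiff sigma f x y.
Proof.
move=> h; have [e [so|so]] := sig_cases _ _ h; rewrite /sdiff e so; ring.
Qed.

Lemma abs_sdiff_swap f x y : adj x y -> `|sdiff sigma f y x| = `|sdiff sigma f x y|.
Proof.
move=> h; rewrite sdiff_swap // normrM normrN.
by have [_ [->|->]] := sig_cases _ _ h; rewrite ?normrN normr1 mul1r.
Qed.

Lemma sum_swap (F : V -> V -> R) :
  \sum_x \sum_(y | adj x y) F x y = \sum_x \sum_(y | adj x y) F y x.
Proof.
rewrite (exchange_big_dep xpredT) //=; apply: eq_bigr => y _.
by apply: eq_bigl => x; rewrite Hsym.
Qed.

Lemma sum_anti (F : V -> V -> R) : (forall x y, adj x y -> F y x = - F x y) ->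
  \sum_x \sum_(y | adj x y) F x y = 0.
Proof.
move=> H; have := sum_swap F.
rewrite [RHS](eq_bigr (fun x => - \sum_(y | adj x y) F x y)); last first.
  by move=> x _; rewrite -sumrN; apply: eq_bigr => y hy; rewrite H.
rewrite sumrN => /eqP; rewrite -subr_eq0 opprK -mulr2n -mulr_natr mulf_eq0.
by rewrite pnatr_eq0 orbF => /eqP.
Qed.

Lemma sum_Lpf f phi : \sum_x d x * Lpf adj sigma p f phi x = 0.
Proof.
rewrite /Lpf; under eq_bigr do rewrite degK.
apply: sum_anti => x y h; rewrite abs_sdiff_swap //; ring.
Qed.

Lemma sum_Gam f g : \sum_x d x * Gam adj sigma p f g x
   = - \sum_x g x * (d x * plap adj sigma p f x).
Proof.
rewrite /Gam /plap; under eq_bigr do rewrite degK2.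
rewrite [in RHS](eq_bigr (fun x => g x * \sum_(y | adj x y) ppow p (sdiff sigma f x y))); last by move=> x _; rewrite degK.
rewrite -mulr_sumr.
have H1 : \sum_x \sum_(y | adj x y) ppow p (sdiff sigma f x y) * (sigma x y * g y)
   = - \sum_x \sum_(y | adj x y) ppow p (sdiff sigma f x y) * g x.
  rewrite sum_swap -sumrN; apply: eq_bigr => x _; rewrite -sumrN.
  apply: eq_bigr => y h; rewrite sdiff_swap //.
  have [e [so|so]] := sig_cases _ _ h; rewrite e so.
    by rewrite mulN1r mul1r ppowN mulNr.
  by rewrite opprK mul1r mulN1r mulrN.
have H2 : \sum_x \sum_(y | adj x y) ppow p (sdiff sigma f x y) * sdiff sigma g x y
  = \sum_x \sum_(y | adj x y) ppow p (sdiff sigma f x y) * (sigma x y * g y)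
   - \sum_x \sum_(y | adj x y) ppow p (sdiff sigma f x y) * g x.
  rewrite -sumrB; apply: eq_bigr => x _; rewrite -sumrB; apply: eq_bigr => y _.
  by rewrite /sdiff mulrBr.
rewrite H2 H1.
have -> : \sum_x g x * \sum_(y | adj x y) ppow p (sdiff sigma f x y)
   = \sum_x \sum_(y | adj x y) ppow p (sdiff sigma f x y) * g x.
  by apply: eq_bigr => x _; rewrite mulr_sumr; apply: eq_bigr => y _; rewrite mulrC.
by set A := \sum_x _; field.
Qed.

Lemma Gam_ge0 f x : 0 <= Gam adj sigma p f f x.
Proof.
rewrite /Gam; apply: mulr_ge0; first by rewrite invr_ge0 mulr_ge0 // /deg ler0n.
apply: sumr_ge0 => y _; rewrite ppowE -mulrA mulr_ge0 ?powR_ge0 //.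
by rewrite -expr2 sqr_ge0.
Qed.



Lemma t_ppow t : t * ppow p t = `|t| `^ p.
Proof.
have p0 : p != 0 by apply: lt0r_neq0; apply: lt_le_trans Hp.
have [->|t0] := eqVneq t 0; first by rewrite mul0r normr0 powR0.
rewrite ppowE mulrCA -expr2 -real_normK ?num_real // -(powR_mulrn _ (normr_ge0 t)).
rewrite -powRD; first by congr (_ `^ _); ring.
by rewrite normr_eq0 t0 implybT.
Qed.

Lemma ppow_sq t : ppow p t ^+ 2 = `|t| `^ p * `|t| `^ (p - 2).
Proof. by rewrite expr2 {1}ppowE -mulrA t_ppow mulrC. Qed.

Lemma jensen (w g : V -> R) q : 1 <= q -> (forall x, 0 <= w x) -> (forall x, 0 <= g x) ->
  0 < \sum_x w x -> 0 <= \sum_x w x * g x ->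
  (\sum_x w x) * ((\sum_x w x * g x) / \sum_x w x) `^ q <= \sum_x w x * g x `^ q.
Proof.
move=> q1 w0 g0 W0 M0; set W := \sum_x w x; set M := \sum_x w x * g x.
set m := M / W.
have m0 : 0 <= m by rewrite divr_ge0 // ltW.
have Mm : M = W * m by rewrite /m mulrCA mulfV ?mulr1 // gt_eqF.
rewrite le_eqVlt in q1; case/predU1P: q1 => [<-|q1].
  rewrite powRr1 // -Mm; apply: le_trans (lexx _) _.
  by rewrite le_eqVlt; apply/orP; left; apply/eqP; apply: eq_bigr => x _; rewrite powRr1.
have q0 : 0 < q by apply: lt_trans q1.
have qq0 : 0 < q / (q - 1) by rewrite divr_gt0 // subr_gt0.
have Y x : q * (g x * m `^ (q - 1)) <= g x `^ q + (q - 1) * m `^ q.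
  have := @conjugate_powR R (g x) (m `^ (q - 1)) q (q / (q - 1)) (g0 x) (powR_ge0 _ _) q0 qq0.
  have q10 : q - 1 != 0 by rewrite subr_eq0 gt_eqF.
  have e1 : (q - 1) * (q / (q - 1)) = q by field.
  have e2 : q^-1 + (q - 1) / q = 1 by field; rewrite gt_eqF.
  rewrite invf_div -powRrM e1 => /(_ e2) H.
  have -> : g x `^ q + (q - 1) * m `^ q = q * (g x `^ q / q + m `^ q * ((q - 1) / q)).
    by field; rewrite gt_eqF.
  by rewrite ler_pM2l.
have S : \sum_x w x * (q * (g x * m `^ (q - 1))) <= \sum_x w x * (g x `^ q + (q - 1) * m `^ q).
  by apply: ler_sum => x _; apply: ler_wpM2l; [apply: w0 | apply: Y].
have E1 : \sum_x w x * (q * (g x * m `^ (q - 1))) = q * (W * m `^ q).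
  rewrite -(mulr_powRB1 m0 q0) [W * _]mulrA -Mm /M mulr_suml mulr_sumr.
  by apply: eq_bigr => x _; ring.
have E2 : \sum_x w x * (g x `^ q + (q - 1) * m `^ q) = \sum_x w x * g x `^ q + (q - 1) * (W * m `^ q).
  rewrite /W mulr_suml mulr_sumr -big_split /=; apply: eq_bigr => x _; ring.
rewrite E1 E2 in S; lra.
Qed.

Lemma mono_A (f : V -> R) :
  \sum_x d x * (`|f x| `^ p * `|f x| `^ (p - 2))
  <= (\sum_x d x * `|f x| `^ p) * (\sum_x d x * `|f x| `^ p) `^ ((p - 2) / p).
Proof.
have p0 : 0 < p by apply: lt_le_trans Hp.
set S := \sum_x _.
have d0 x : 0 <= d x by rewrite /deg ler0n.
rewrite /S mulr_suml; apply: ler_sum => x _; rewrite mulrA.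
have [dx0|dx0] := eqVneq (d x) 0; first by rewrite dx0 !mul0r.
apply: ler_wpM2l; first by rewrite mulr_ge0 ?powR_ge0.
have -> : `|f x| `^ (p - 2) = (`|f x| `^ p) `^ ((p - 2) / p).
  by rewrite -powRrM; congr (_ `^ _); field; rewrite gt_eqF.
apply: ge0_ler_powR.
- by rewrite divr_ge0 ?subr_ge0 // ltW.
- by rewrite nnegrE powR_ge0.
- by rewrite nnegrE; apply: sumr_ge0 => y _; rewrite mulr_ge0 ?powR_ge0.
have d1 : 1 <= d x.
  by move: dx0; rewrite /deg pnatr_eq0 ler1n lt0n.
apply: (@le_trans _ _ (d x * `|f x| `^ p)).
  by rewrite ler_peMl ?powR_ge0.
rewrite (bigD1 x) //= lerDl; apply: sumr_ge0 => y _; rewrite mulr_ge0 ?powR_ge0 //.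
Qed.

Lemma ppow_neq0 t : t != 0 -> ppow p t != 0.
Proof.
move=> t0; rewrite ppowE mulf_neq0 //; apply: lt0r_neq0; apply: powR_gt0.
by rewrite normr_gt0.
Qed.

Lemma main_from_CD (K N lam : R) (f : V -> R) :
  1 < N -> 0 < K ->
  (forall x, N^-1 * (plap adj sigma p f x) ^+ 2
      + K * (Gam adj sigma p f f x) `^ ((2 * p - 2) / p) <= Gam2 adj sigma p f x) ->
  (exists x, f x != 0) -> (forall x, - plap adj sigma p f x = lam * ppow p (f x)) ->
  lam != 0 ->
  (vol R adj)^-1 `^ ((p - 2) / 2) * (N * K / (N - 1)) `^ (p / 2) <= lam.
Proof.
move=> N1 K0 CD [x0 fx0] Hf lam0.
have p0 : 0 < p by apply: lt_le_trans Hp.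
have N0 : 0 < N by apply: lt_trans N1.
have d0 x : 0 <= d x by rewrite /deg ler0n.
have E x : plap adj sigma p f x = - (lam * ppow p (f x)) by rewrite -Hf opprK.
set S := \sum_x d x * `|f x| `^ p.
set A := \sum_x d x * (`|f x| `^ p * `|f x| `^ (p - 2)).
set q := (2 * p - 2) / p.
set r := (p - 2) / p.
have qr : q = 1 + r by rewrite /q /r; field; rewrite gt_eqF.
have r0 : 0 <= r by rewrite divr_ge0 ?subr_ge0 // ltW.
have hG : \sum_x d x * Gam adj sigma p f f x = lam * S.
  rewrite sum_Gam /S mulr_sumr -sumrN; apply: eq_bigr => x _.
  by rewrite E -t_ppow; ring.
have hG2 : \sum_x d x * Gam2 adj sigma p f x = lam ^+ 2 * A.
  transitivity (2^-1 * \sum_x d x * Lpf adj sigma p f (Gam adj sigma p f f) x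
      - \sum_x d x * Gam adj sigma p f (plap adj sigma p f) x).
    rewrite mulr_sumr -sumrB; apply: eq_bigr => x _; rewrite /Gam2; ring.
  rewrite sum_Lpf sum_Gam mulr0 sub0r opprK /A mulr_sumr; apply: eq_bigr => x _.
  by rewrite E -ppow_sq; ring.
have hCD' : \sum_x d x * (N^-1 * (plap adj sigma p f x) ^+ 2
      + K * (Gam adj sigma p f f x) `^ q) <= lam ^+ 2 * A.
  by rewrite -hG2; apply: ler_sum => x _; apply: ler_wpM2l.
have hCD : N^-1 * (lam ^+ 2 * A) + K * \sum_x d x * Gam adj sigma p f f x `^ q
    <= lam ^+ 2 * A.
  apply: le_trans hCD'; rewrite /A !mulr_sumr -big_split /=.
  by apply: ler_sum => x _; rewrite E sqrrN exprMn ppow_sq; rewrite le_eqVlt; apply/orP; left; apply/eqP; ring.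
have dx0 : 0 < d x0.
  rewrite lt_def d0 andbT; apply/negP => /eqP dz.
  have := Hf x0; rewrite /plap (sum_deg0 _ _ dz) mulr0 oppr0 => /esym/eqP.
  by rewrite mulf_eq0 (negbTE lam0) (negbTE (ppow_neq0 _ fx0)).
have S0 : 0 < S.
  rewrite /S (bigD1 x0) //=; apply: ltr_pwDl.
    by rewrite mulr_gt0 // powR_gt0 // normr_gt0.
  by apply: sumr_ge0 => y _; rewrite mulr_ge0 ?powR_ge0.
have vol0 : 0 < vol R adj.
  rewrite /vol (bigD1 x0) //=; apply: ltr_pwDl => //.
  by apply: sumr_ge0 => y _.
have lamgt0 : 0 < lam.
  rewrite lt_def lam0 /=.
  have : 0 <= lam * S by rewrite -hG; apply: sumr_ge0 => x _; rewrite mulr_ge0 ?Gam_ge0.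
  by rewrite pmulr_lge0.
have q1 : 1 <= q.
  rewrite /q ler_pdivlMr // mul1r -subr_ge0.
  have -> : 2 * p - 2 - p = p - 2 by ring.
  by rewrite subr_ge0.
have J := @jensen d (Gam adj sigma p f f) q q1 d0 (Gam_ge0 f) vol0
   (eq_ind_r (fun z => 0 <= z) (ltW (mulr_gt0 lamgt0 S0)) hG).
rewrite -/(vol R adj) hG in J.
set vol' := vol R adj.
set m := lam * S / vol'.
have AS : A <= S * S `^ r := mono_A f.
have K1 : K * (vol' * m `^ q) <= K * \sum_x d x * Gam adj sigma p f f x `^ q.
  by rewrite ler_pM2l.
set Y := K * \sum_x _ in K1 hCD.
set X := lam ^+ 2 * A in hCD.
set Z := K * (vol' * m `^ q) in K1.
have h1 : Z <= (1 - N^-1) * X by lra.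
have m0 : 0 < m by rewrite divr_gt0 // mulr_gt0.
have hq : m `^ q = m * m `^ r.
  by rewrite qr powRD ?powRr1 ?ltW // (gt_eqF m0) implybT.
have vm : vol' * m = lam * S by rewrite /m mulrCA mulfV ?mulr1 // gt_eqF.
set vi := vol'^-1.
have vi0 : 0 < vi by rewrite invr_gt0.
have mr : m `^ r = lam `^ r * S `^ r * vi `^ r.
  by rewrite /m !powRM ?mulr_ge0 ?invr_ge0 ?ltW.
have eZ : Z = K * (lam * S) * (lam `^ r * S `^ r * vi `^ r).
  by rewrite /Z hq [vol' * _]mulrA vm -mr; ring.
have N1' : 0 <= 1 - N^-1 by rewrite subr_ge0 invf_le1 // ltW.
have h2 : Z <= (1 - N^-1) * (lam ^+ 2 * (S * S `^ r)).
  apply: le_trans h1 _; apply: ler_wpM2l => //; apply: ler_wpM2l => //.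
  exact: sqr_ge0.
have Sr0 : 0 < S `^ r by apply: powR_gt0.
have lr0 : 0 < lam `^ r by apply: powR_gt0.
have h3 : (lam * S * S `^ r) * (K * lam `^ r * vi `^ r)
    <= (lam * S * S `^ r) * ((1 - N^-1) * lam).
  have e1 : (lam * S * S `^ r) * (K * lam `^ r * vi `^ r) = Z by rewrite eZ; ring.
  have e2 : (lam * S * S `^ r) * ((1 - N^-1) * lam) = (1 - N^-1) * (lam ^+ 2 * (S * S `^ r)).
    by ring.
  by rewrite e1 e2.
rewrite ler_pM2l ?mulr_gt0 // in h3.
have el : lam = lam `^ (1 - r) * lam `^ r.
  by rewrite -powRD ?subrK ?powRr1 ?ltW // (gt_eqF lamgt0) implybT.
have h4 : K * vi `^ r <= (1 - N^-1) * lam `^ (1 - r).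
  rewrite -(ler_pM2l lr0).
  have e3 : lam `^ r * ((1 - N^-1) * lam `^ (1 - r)) = (1 - N^-1) * lam.
    by rewrite mulrCA [lam `^ r * _]mulrC -el.
  by rewrite e3 mulrA [lam `^ r * K]mulrC.
have N10 : N - 1 != 0 by rewrite subr_eq0 gt_eqF.
have h5 : N * K / (N - 1) * vi `^ r <= lam `^ (1 - r).
  have e4 : N * K / (N - 1) * vi `^ r = (N / (N - 1)) * (K * vi `^ r) by ring.
  have e5 : (N / (N - 1)) * ((1 - N^-1) * lam `^ (1 - r)) = lam `^ (1 - r).
    by field; rewrite N10 gt_eqF.
  rewrite e4 -[X in _ <= X]e5; apply: ler_wpM2l => //.
  by rewrite divr_ge0 ?subr_ge0 ?ltW.
have p20 : 0 <= p / 2 by rewrite divr_ge0 ?ltW.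
have C0 : 0 <= N * K / (N - 1) by rewrite divr_ge0 ?mulr_ge0 ?subr_ge0 ?ltW.
have Hx : N * K / (N - 1) * vi `^ r \in Num.nneg by rewrite nnegrE mulr_ge0 ?powR_ge0.
have Hy : lam `^ (1 - r) \in Num.nneg by rewrite nnegrE powR_ge0.
have H6 := ge0_ler_powR p20 Hx Hy h5.
have e6 : (lam `^ (1 - r)) `^ (p / 2) = lam.
  rewrite -powRrM (_ : (1 - r) * (p / 2) = 1); last by rewrite /r; field; rewrite gt_eqF.
  by rewrite powRr1 // ltW.
have e7 : (N * K / (N - 1) * vi `^ r) `^ (p / 2)
    = vi `^ ((p - 2) / 2) * (N * K / (N - 1)) `^ (p / 2).
  rewrite powRM //; last exact: powR_ge0.
  rewrite -powRrM (_ : r * (p / 2) = (p - 2) / 2); last by rewrite /r; field; rewrite gt_eqF.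
  by rewrite mulrC.
by rewrite -e7 -[X in _ <= X]e6.
Qed.
End Alg.

Local Open Scope classical_set_scope.
Set Implicit Arguments.
Unset Strict Implicit.

Section Cont.
Variable R : realType.

Definition ct (g : R -> R) := g e @[e --> (0:R)] --> g 0.

Lemma ct_cst c : ct (fun _ => c).
Proof. exact: cvg_cst. Qed.

Lemma ct_id : ct id.
Proof. exact: cvg_id. Qed.

Lemma ctD g h : ct g -> ct h -> ct (fun e => g e + h e).
Proof. by move=> cg ch; apply: cvgD. Qed.

Lemma ctM g h : ct g -> ct h -> ct (fun e => g e * h e).
Proof. by move=> cg ch; apply: cvgM. Qed.

Lemma ctN g : ct g -> ct (fun e => - g e).
Proof. by move=> cg; apply: cvgN. Qed.

Lemma ctB g h : ct g -> ct h -> ct (fun e => g e - h e).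
Proof. by move=> cg ch; apply: ctD => //; apply: ctN. Qed.

Lemma ct_sum (I : finType) (P : pred I) (G : I -> R -> R) :
  (forall i, ct (G i)) -> ct (fun e => \sum_(i | P i) G i e).
Proof.
move=> H; rewrite /ct; apply: cvg_big => //.
  exact: add_continuous.
by move=> i _; apply: H.

Qed.

Lemma ct_comp (h : R -> R) g : {for g 0, continuous h} -> ct g -> ct (fun e => h (g e)).
Proof. move=> ch cg; rewrite /ct; apply: cvg_comp; [exact: cg | exact: ch]. Qed.



Lemma cont_powabs r : 0 <= r -> continuous (fun t : R => `|t| `^ r).
Proof.
move=> r0 t; rewrite le_eqVlt in r0; case/predU1P: r0 => [<-|rpos].
  rewrite (_ : (fun t => _) = fun=> 1); first exact: cvg_cst.
  by apply/funext => x; rewrite powRr0.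
have [->|t0] := eqVneq t 0.
  rewrite /continuous_at normr0 powR0 ?gt_eqF //.
  apply/cvgrPdist_lt => eps eps0.
  have d0 : 0 < eps `^ (r^-1) by apply: powR_gt0.
  near=> x.
  rewrite sub0r normrN ger0_norm ?powR_ge0 //.
  have -> : eps = (eps `^ (r^-1)) `^ r.
    by rewrite -powRrM mulVf ?gt_eqF // powRr1 // ltW.
  apply: gt0_ltr_powR => //; rewrite ?nnegrE ?normr_ge0 ?powR_ge0 //.
have nt : 0 < `|t| by rewrite normr_gt0.
have c1 : `|x| @[x --> t] --> `|t| by apply: cvg_norm; exact: cvg_id.
have n0 : \forall x \near t, 0 < `|x| by apply: (cvgr_gt _ c1).
apply: (@cvg_trans _ ((fun x => expR (r * ln `|x|)) @ t)).
  apply: near_eq_cvg; near=> x; rewrite /powR gt_eqF //; near: x; exact: n0.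
rewrite /powR (gt_eqF nt).
apply: (cvg_comp (fun x => r * ln `|x|) expR (G := nbhs (r * ln `|t|))); last exact: continuous_expR.
apply: cvgMl_tmp.
apply: cvg_comp c1 _; exact: continuous_ln.
Unshelve. all: by end_near.
Qed.

End Cont.

Section CDall.
Variables (R : realType) (V : finType) (adj : rel V) (sigma : V -> V -> R) (p : R).
Hypotheses (Hsym : symmetric adj) (Hirr : irreflexive adj) (Hsig : signature adj sigma) (Hp : 2 <= p).

Definition ctf (Phi : R -> V -> R) := forall z, ct (fun e => Phi e z).

Lemma ct_sdiff Phi : ctf Phi -> forall z w, ct (fun e => sdiff sigma (Phi e) z w).
Proof. by move=> H z w; rewrite /sdiff; apply: ctB => //; apply: ctM => //; apply: ct_cst. Qed.

Lemma r0 : 0 <= p - 2.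
Proof. by rewrite subr_ge0. Qed.

Lemma ct_ppow g : ct g -> ct (fun e => ppow p (g e)).
Proof.
move=> cg; have -> : (fun e => ppow p (g e)) = (fun e => `|g e| `^ (p - 2) * g e).
  by apply/funext => e; rewrite ppowE.
apply: ctM => //; apply: (@ct_comp _ (fun t => `|t| `^ (p - 2)) g) => //.
exact: (cont_powabs r0 (x := g 0)).
Qed.

Lemma ct_abspow g : ct g -> ct (fun e => `|g e| `^ (p - 2)).
Proof.
move=> cg; apply: (@ct_comp _ (fun t => `|t| `^ (p - 2)) g) => //.
exact: (cont_powabs r0 (x := g 0)).
Qed.

Lemma ctf_plap Phi : ctf Phi -> ctf (fun e => plap adj sigma p (Phi e)).
Proof.
move=> H z; rewrite /plap; apply: ctM; first exact: ct_cst.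
apply: (@ct_sum _ _ (adj z) (fun y e => ppow p (sdiff sigma (Phi e) z y))) => y.
by apply: ct_ppow; apply: ct_sdiff.
Qed.

Lemma ctf_Gam Phi Psi : ctf Phi -> ctf Psi -> ctf (fun e => Gam adj sigma p (Phi e) (Psi e)).
Proof.
move=> H1 H2 z; rewrite /Gam; apply: ctM; first exact: ct_cst.
apply: (@ct_sum _ _ (adj z) (fun y e => ppow p (sdiff sigma (Phi e) z y) * sdiff sigma (Psi e) z y)) => y.
apply: ctM; first by apply: ct_ppow; apply: ct_sdiff.
exact: ct_sdiff.
Qed.

Lemma ctf_Lpf Phi Psi : ctf Phi -> ctf Psi -> ctf (fun e => Lpf adj sigma p (Phi e) (Psi e)).
Proof.
move=> H1 H2 z; rewrite /Lpf; apply: ctM; first exact: ct_cst.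
apply: (@ct_sum _ _ (adj z) (fun y e => `|sdiff sigma (Phi e) z y| `^ (p - 2) * (Psi e y - Psi e z))) => y.
apply: ctM; first by apply: ct_abspow; apply: ct_sdiff.
exact: ctB.
Qed.

Lemma ctf_Gam2 Phi : ctf Phi -> ctf (fun e => Gam2 adj sigma p (Phi e)).
Proof.
move=> H z; rewrite /Gam2; apply: ctB.
  apply: ctM; first exact: ct_cst.
  by apply: (ctf_Lpf (Psi := fun e => Gam adj sigma p (Phi e) (Phi e))) => //; apply: ctf_Gam.
by apply: (ctf_Gam (Psi := fun e => plap adj sigma p (Phi e))) => //; apply: ctf_plap.
Qed.



Lemma CD_all (K N : R) : CDp adj sigma p K N -> forall x f,
  N^-1 * (plap adj sigma p f x) ^+ 2
      + K * (Gam adj sigma p f f x) `^ ((2 * p - 2) / p) <= Gam2 adj sigma p f x.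
Proof.
move=> CD x f.
have p0 : 0 < p by apply: lt_le_trans Hp.
have q0 : 0 <= (2 * p - 2) / p.
  apply: divr_ge0; last exact: ltW p0.
  have -> : 2 * p - 2 = p + (p - 2) by ring.
  exact: addr_ge0 (ltW p0) r0.
pose Phi := fun (e : R) (z : V) => f z + e * (z == x)%:R.
have Phi0 : Phi 0 = f by apply/funext => z; rewrite /Phi mul0r addr0.
have cPhi : ctf Phi.
  move=> z; apply: ctD; first exact: ct_cst.
  by apply: ctM; [exact: ct_id | exact: ct_cst].
pose h := fun e => Gam2 adj sigma p (Phi e) x - (N^-1 * (plap adj sigma p (Phi e) x ^+ 2)
      + K * `|Gam adj sigma p (Phi e) (Phi e) x| `^ ((2 * p - 2) / p)).
have ch : ct h.
  apply: ctB; first exact: ctf_Gam2.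
  apply: ctD; apply: ctM; try exact: ct_cst.
    by apply: ctM; apply: ctf_plap.
  apply: (@ct_comp _ (fun t => `|t| `^ ((2 * p - 2) / p))
     (fun e => Gam adj sigma p (Phi e) (Phi e) x)).
    exact: (cont_powabs q0 (x := Gam adj sigma p (Phi 0) (Phi 0) x)).
  exact: ctf_Gam.
have nz : \forall e \near 0^'+, forall y, adj x y -> sdiff sigma f x y != e.
  apply: filter_forall => y.
  have [hp|hn] := ltP 0 (sdiff sigma f x y).
    near=> e => _; rewrite gt_eqF //; near: e; exact: nbhs_right_lt.
  near=> e => _; rewrite lt_eqF //; apply: le_lt_trans hn _; near: e; exact: nbhs_right_gt.
have ev : \forall e \near 0^'+, 0 <= h e.
  near=> e.
  have key : forall y, adj x y -> sdiff sigma f x y != e by near: e; exact: nz.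
  rewrite /h subr_ge0 ger0_norm ?Gam_ge0 //; apply: CD => y hy.
  have xy : (y == x) = false by apply/negbTE; apply/eqP => yx; move: hy; rewrite yx Hirr.
  rewrite /sdiff /Phi xy eqxx mulr0 addr0 mulr1 opprD addrA subr_eq0.
  have := key y hy; apply: contra => /eqP E; apply/eqP; rewrite /sdiff E.
  by [].
have h0 : 0 <= h 0.
  rewrite leNgt; apply/negP => hneg.
  have lt0 : \forall t \near 0^'+, h t < 0 := cvgr_lt _ (cvg_at_right_filter ch) _ hneg.
  have PF : ProperFilter (nbhs (0:R)^'+) by exact: (@at_right_proper_filter R 0).
  have H := filterI ev (lt0 PF).
  have [t Ht] := filter_ex (H PF). case: Ht => a b.
  by move: (le_lt_trans a b); rewrite ltxx.
move: h0; rewrite /h Phi0 subr_ge0 ger0_norm //; exact: Gam_ge0.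
Unshelve. all: by end_near.
Qed.

End CDall.

Unset Implicit Arguments.
Set Strict Implicit.
Local Close Scope classical_set_scope.

Theorem theorem4p10 (R : realType) (V : finType) (adj : rel V)
    (sigma : V -> V -> R) (p K N : R) :
  simple_connected_graph adj -> signature adj sigma ->
  2 <= p -> 1 < N -> 0 < K ->
  CDp adj sigma p K N ->
  forall lam : R, is_eigenvalue adj sigma p lam -> lam != 0 ->
    (vol R adj)^-1 `^ ((p - 2) / 2) * (N * K / (N - 1)) `^ (p / 2) <= lam.
Proof.
move=> [Hsym [Hirr _]] Hsig Hp N1 K0 CD lam [f [Hx Hf]] lam0.
apply: (@main_from_CD _ _ _ _ _ Hsym Hsig Hp K N lam f N1 K0 _ Hx Hf lam0).
move=> x; exact: (CD_all Hirr Hp CD).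
Qed.
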